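(* Let $X$ be a finite set and let $\tau$ be a non-empty subset of $\binom{X}{2}$. Then $\tau$ is thin (i.e. $|L(\tau')|\ge|\tau'|+1$ for every non-empty $\tau'\subseteq\tau$) if and only if $\tau$ is total-order flexible.
   Context: $L(\tau)=\bigcup_{s\in\tau}s$. A non-empty $\tau\subseteq\binom{X}{2}$ is total-order flexible if for every choice, for each $\{x,y\}\in\tau$, of one of $x\prec y$ or $y\prec x$, there exists a total order on $X$ agreeing with all chosen relations. *)

(* Defs.v *)
From mathcomp Require Import all_boot.
Set Implicit Arguments. Unset Strict Implicit. Unset Printing Implicit Defensive.

Section Defs.
Variable X : finType.

Definition L (tau : {set {set X}}) : {set X} := \bigcup_(s in tau) s.

Definition pairs (tau : {set {set X}}) : Prop := forall s, s \in tau -> #|s| = 2.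

Definition thin (tau : {set {set X}}) : Prop :=
  forall tau' : {set {set X}}, tau' \subset tau -> tau' != set0 ->
    #|tau'| + 1 <= #|L tau'|.

Definition strict_total_order (lt : rel X) : Prop :=
  irreflexive lt /\ transitive lt /\ (forall x y, x != y -> lt x y || lt y x).

(* total-order flexible: for every choice of orientation of each pair
   {x,y} in tau (encoded by f s = the element chosen to be smaller), there is
   a total order on X agreeing with all the chosen relations. *)
Definition total_order_flexible (tau : {set {set X}}) : Prop :=
  forall f : {set X} -> X, (forall s, s \in tau -> f s \in s) ->
    exists lt : rel X, strict_total_order lt /\
      (forall s, s \in tau -> forall y, y \in s -> y != f s -> lt (f s) y).

End Defs.

(* Main.v *)
Require Import Defs.
From mathcomp Require Import all_boot.
From mathcomp Require Import zify.

Set Implicit Arguments. Unset Strict Implicit. Unset Printing Implicit Defensive.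

Section Aux.
Variable X : finType.

Definition deg (sg : {set {set X}}) (x : X) := #|[set s in sg | x \in s]|.
Definition cov (sg : {set {set X}}) (f : {set X} -> X) (x : X) :=
  [exists s in sg, (x \in s) && (f s != x)].
Definition leafy (tau : {set {set X}}) : Prop :=
  forall tau' : {set {set X}}, tau' \subset tau -> tau' != set0 ->
    exists x, x \in L tau' /\ deg tau' x <= 1.

Lemma three (s : {set X}) a b c : #|s| = 2 -> a \in s -> b \in s -> c \in s ->
  a != b -> a != c -> b = c.
Proof.
move=> h2 ha hb hc hab hac; apply/eqP; apply/negPn/negP => hbc.
have : #|a |: (b |: [set c])| <= #|s|.
  apply: subset_leq_card; apply/subsetP => z; rewrite !inE.
  by case/or3P => /eqP ->.
rewrite !cardsU1 !inE cards1 (negbTE hab) (negbTE hac) (negbTE hbc) h2 //.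
Qed.

Lemma deg_uniq sg x s1 s2 : deg sg x <= 1 -> s1 \in sg -> s2 \in sg ->
  x \in s1 -> x \in s2 -> s1 = s2.
Proof.
move=> hd h1 h2 x1 x2; apply/eqP; apply/negPn/negP => ne.
have : 1 < deg sg x.
  apply/card_gt1P; exists s1, s2; by rewrite !inE h1 h2 x1 x2 ne.
by rewrite ltnNge hd.
Qed.

Lemma inL (sg : {set {set X}}) (x : X) : reflect (exists2 s, s \in sg & x \in s) (x \in L sg).
Proof. by apply: (iffP bigcupP) => -[s h1 h2]; exists s. Qed.

Lemma pair_other (s : {set X}) r : #|s| = 2 -> r \in s -> exists u, u \in s /\ u != r.
Proof.
move=> h2 hr; have : 0 < #|s :\ r|.
  by move: h2; rewrite (cardsD1 r) hr; case: #|s :\ r|.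
by case/card_gt0P => u; rewrite !inE => /andP [h1 h3]; exists u.
Qed.

Lemma lemC n (sg : {set {set X}}) : #|sg| <= n -> pairs sg -> forall r,
  exists f : {set X} -> X, (forall s, s \in sg -> f s \in s) /\
    (forall x, x \in L sg -> (x == r) || (1 < deg sg x) -> cov sg f x).
Proof.
elim: n sg => [|n IH] sg hle hp r.
  have -> : sg = set0 by apply/cards0_eq; move: hle; case: #|sg|.
  exists (fun _ => r); split => [s|x]; first by rewrite inE.
  by case/inL => s; rewrite inE.
have main : forall r0, r0 \in L sg -> exists f : {set X} -> X,
    (forall s, s \in sg -> f s \in s) /\
    (forall x, x \in L sg -> (x == r0) || (1 < deg sg x) -> cov sg f x).
  move=> r0 /inL [s1 s1in r0s1].
  have [u1 [u1s1 u1r0]] := pair_other (hp _ s1in) r0s1.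
  pose sg' := [set s in sg | r0 \notin s].
  have hle' : #|sg'| <= n.
    have : sg' \proper sg.
      apply/properP; split; first by apply/subsetP => s; rewrite inE => /andP[].
      by exists s1; rewrite // inE r0s1 andbF.
    by move/proper_card; move: hle; lia.
  have hp' : pairs sg' by move=> s; rewrite inE => /andP [h _]; apply: hp.
  have [f' [hf'in hf'cov]] := IH sg' hle' hp' u1.
  exists (fun s : {set X} => if r0 \in s then (if s == s1 then u1 else r0) else f' s).
  split.
    move=> s sin; case: ifP => rs; last by apply: hf'in; rewrite inE sin rs.
    by case: eqP => [->|].
  move=> x xL hx.
  case: (eqVneq x r0) => [->|xr0].
    apply/existsP; exists s1; by rewrite s1in r0s1 eqxx u1r0.
  rewrite (negbTE xr0) /= in hx.
  have hdone : forall t, t \in sg -> x \in t -> t != s1 -> r0 \in t -> cov sg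
      (fun s : {set X} => if r0 \in s then (if s == s1 then u1 else r0) else f' s) x.
    move=> t tin xt ts1 r0t; apply/existsP; exists t.
    by rewrite tin xt r0t (negbTE ts1) eq_sym xr0.
  have hIH : forall t, t \in sg' -> x \in t -> (x == u1) || (1 < deg sg' x) -> cov sg
      (fun s : {set X} => if r0 \in s then (if s == s1 then u1 else r0) else f' s) x.
    move=> t tin xt hc.
    have xL' : x \in L sg' by apply/inL; exists t.
    case/existsP: (hf'cov x xL' hc) => t' /andP [t'in /andP [xt' ft']].
    move: t'in; rewrite inE => /andP [t'in r0t'].
    apply/existsP; exists t'; by rewrite t'in xt' (negbTE r0t').
  have xu1 : x \in s1 -> x == u1.
    move=> xs1; apply/eqP; apply: (three (hp _ s1in) r0s1) => //; by rewrite eq_sym.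
  case/card_gt1P: hx => t1 [t2 []]; rewrite !inE => /andP [t1in xt1] /andP [t2in xt2] ne.
  have step : forall t t', t \in sg -> x \in t -> t' \in sg -> x \in t' -> t != t' ->
      t = s1 -> cov sg
      (fun s : {set X} => if r0 \in s then (if s == s1 then u1 else r0) else f' s) x.
    move=> t t' tin xt t'in xt' tt' ts1; subst t.
    case: (boolP (r0 \in t')) => r0t'.
      by apply: (hdone t') => //; rewrite eq_sym.
    by apply: (hIH t') => //; [rewrite inE t'in r0t' | rewrite xu1].
  case: (eqVneq t1 s1) => ts1; first exact: (step t1 t2).
  case: (eqVneq t2 s1) => t2s1; first by apply: (step t2 t1) => //; rewrite eq_sym.
  case: (boolP (r0 \in t1)) => r0t1; first exact: (hdone t1).
  case: (boolP (r0 \in t2)) => r0t2; first exact: (hdone t2).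
  apply: (hIH t1) => //; first by rewrite inE t1in r0t1.
  apply/orP; right; apply/card_gt1P; exists t1, t2.
  by rewrite !inE t1in t2in r0t1 r0t2 xt1 xt2 ne.
case: (boolP (r \in L sg)) => rL; first exact: main.
case: (eqVneq sg set0) => [->|].
  exists (fun _ => r); split => [s|x]; first by rewrite inE.
  by case/inL => s; rewrite inE.
case/set0Pn => s sin.
have : 0 < #|s| by rewrite (hp _ sin).
case/card_gt0P => r' r's.
have r'L : r' \in L sg by apply/inL; exists s.
have [f [h1 h2]] := main r' r'L.
exists f; split => // x xL /orP [/eqP xr|hd].
  by move: rL; rewrite -xr xL.
by apply: h2; rewrite // hd orbT.
Qed.

Lemma thin_leafy tau : pairs tau -> thin tau -> leafy tau.
Proof.
move=> hp ht tau' sub ne.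
have hp' : pairs tau' by move=> s sin; apply: hp; apply: (subsetP sub).
case/set0Pn: (ne) => s0 s0in.
have : 0 < #|s0| by rewrite (hp' _ s0in).
case/card_gt0P => r rs0.
have [f [hfin hcov]] := lemC (leqnn _) hp' r.
case: (boolP [exists x in L tau', ~~ cov tau' f x]).
  case/existsP => x /andP [xL nc]; exists x; split => //.
  move: nc; apply: contraR; rewrite -ltnNge => hd; apply: hcov => //.
  by rewrite hd orbT.
move=> hall.
have hc : forall x, x \in L tau' -> cov tau' f x.
  move=> x xL; case: (boolP (cov tau' f x)) => // nc; case/negP: hall.
  by apply/existsP; exists x; rewrite xL nc.
pose g x := odflt s0 [pick s in tau' | (x \in s) && (f s != x)].
have hg : forall x, x \in L tau' -> [/\ g x \in tau', x \in g x & f (g x) != x].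
  move=> x xL; rewrite /g; case: pickP => [s /andP [sin /andP [xs fs]] | none] /=.
    by [].
  case/existsP: (hc x xL) => s /andP [sin hs].
  by move: (none s); rewrite sin hs.
have ginj : {in L tau' &, injective g}.
  move=> x y xL yL hxy.
  have [gx xgx fgx] := hg x xL; have [gy ygy fgy] := hg y yL.
  rewrite -hxy in ygy fgy.
  apply: (three (hp' _ gx) (hfin _ gx)) => //; by rewrite eq_sym.
have : #|g @: L tau'| <= #|tau'|.
  apply: subset_leq_card; apply/subsetP => s /imsetP [x xL ->].
  by have [] := hg x xL.
rewrite card_in_imset //.
move: (ht tau' sub ne); lia.
Qed.

Lemma leafy_thin tau : pairs tau -> leafy tau -> thin tau.
Proof.
move=> hp hl tau' sub ne.
move: {2}#|tau'| (leqnn #|tau'|) => n hn.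
elim: n tau' hn sub ne => [|n IH] tau' hn sub ne.
  by case/set0Pn: ne => s sin; move: hn; rewrite (cardsD1 s) sin.
have [x [xL hd]] := hl tau' sub ne.
case/inL: (xL) => s0 s0in xs0.
have hsub : s0 \subset L tau' by apply/subsetP => z zs; apply/inL; exists s0.
have c1 := cardsD1 s0 tau'; rewrite s0in in c1.
case: (eqVneq (tau' :\ s0) set0) => [e|ne'].
  rewrite c1 e cards0.
  have := subset_leq_card hsub; rewrite (hp _ (subsetP sub _ s0in)); lia.
have := IH (tau' :\ s0) ltac:(lia) ltac:(apply: subset_trans sub; apply: subsetDl) ne'.
have : L (tau' :\ s0) \subset L tau' :\ x.
  apply/subsetP => y /inL [s]; rewrite !inE => /andP [ss0 sin] ys.
  rewrite andbC; apply/andP; split; first by apply/inL; exists s.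
  apply: contraNneq ss0 => yx; subst y; apply/eqP.
  exact: (deg_uniq hd).
move/subset_leq_card.
have := cardsD1 x (L tau'); rewrite xL; lia.
Qed.

Lemma leafy_flex tau : pairs tau -> leafy tau -> total_order_flexible tau.
Proof.
move=> hp hl f hf.
suff [r [rinj hr]] : exists r : X -> nat, injective r /\
   forall s, s \in tau -> forall y, y \in s -> y != f s -> r (f s) < r y.
  exists [rel a b | r a < r b]; split; last by move=> s sin y ys yf; apply: hr.
  split; first by move=> a /=; rewrite ltnn.
  split; first by move=> b a c /= h1 h2; apply: ltn_trans h2.
  move=> a b ab /=; rewrite -neq_ltn; apply: contra ab => /eqP e.
  by rewrite (rinj _ _ e).
suff gen : forall n (tau' : {set {set X}}), #|tau'| <= n -> tau' \subset tau ->
  exists r : X -> nat, injective r /\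
   forall s, s \in tau' -> forall y, y \in s -> y != f s -> r (f s) < r y.
  exact: (gen _ tau (leqnn _) (subxx _)).
elim => [|n IH] tau' hn sub.
  exists (fun z => nat_of_ord (enum_rank z)); split; first by move=> a b /val_inj /enum_rank_inj.
  move=> s; move: hn; case: (eqVneq tau' set0) => [->|/set0Pn [t tin]].
    by rewrite inE.
  by rewrite (cardsD1 t) tin.
case: (eqVneq tau' set0) => [->|ne].
  by exists (fun z => nat_of_ord (enum_rank z)); split; [by move=> a b /val_inj /enum_rank_inj | move=> s; rewrite inE].
have [x [xL hd]] := hl tau' sub ne.
case/inL: (xL) => s0 s0in xs0.
have c1 := cardsD1 s0 tau'; rewrite s0in in c1.
have [r [rinj hr]] := IH (tau' :\ s0) ltac:(lia)
   ltac:(apply: subset_trans sub; apply: subsetDl).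
have hin : forall s, s \in tau' -> f s \in s by move=> s sin; apply: hf; apply: (subsetP sub).
have other : forall s y, s \in tau' -> s != s0 -> y \in s -> y != x.
  move=> s y sin ss0 ys; apply: contraNneq ss0 => yx; subst y; apply/eqP.
  exact: (deg_uniq hd).
have inD : forall s, s \in tau' -> s != s0 -> s \in tau' :\ s0.
  by move=> s sin ss0; rewrite !inE ss0.
case: (eqVneq (f s0) x) => fx.
  exists (fun z => if z == x then 0 else (r z).+1); split.
    move=> a b /=; case: eqP => [->|ax]; case: eqP => [->|bx] //.
    by case => /rinj.
  move=> s sin y ys yf /=.
  case: (eqVneq s s0) => [ss0|ss0].
    subst s; rewrite fx eqxx; rewrite fx in yf; by rewrite (negbTE yf).
  rewrite (negbTE (other _ _ sin ss0 (hin _ sin))) (negbTE (other _ _ sin ss0 ys)).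
  by rewrite ltnS; apply: hr => //; apply: inD.
pose M := (\max_z r z).+1.
have rM : forall z, r z < M by move=> z; rewrite ltnS; apply: leq_bigmax.
exists (fun z => if z == x then M else r z); split.
  move=> a b /=; case: eqP => [->|ax]; case: eqP => [->|bx] //.
  - by move=> e; have := rM b; rewrite -e ltnn.
  - by move=> e; have := rM a; rewrite e ltnn.
  - by move/rinj.
move=> s sin y ys yf /=.
case: (eqVneq s s0) => [ss0|ss0].
  subst s; rewrite (negbTE fx); case: eqP => // yx.
  have xf : x != f s0 by rewrite eq_sym.
  have xy : x != y by apply/eqP => e; apply: yx.
  have e := three (hp _ (subsetP sub _ s0in)) xs0 (hin _ s0in) ys xf xy.
  by rewrite e eqxx in yf.
rewrite (negbTE (other _ _ sin ss0 (hin _ sin))) (negbTE (other _ _ sin ss0 ys)).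
by apply: hr => //; apply: inD.
Qed.

Lemma seq_min (lt : rel X) : irreflexive lt -> transitive lt ->
  forall s : seq X, s != [::] -> exists2 m, m \in s & forall y, y \in s -> ~~ lt y m.
Proof.
move=> irr tr; elim => [//|a s IH] _.
case: s IH => [|b s] IH.
  by exists a; rewrite ?inE // => y; rewrite inE => /eqP ->; rewrite irr.
have [m ms hm] := IH isT.
case: (boolP (lt a m)) => ham.
  exists a; first by rewrite inE eqxx.
  move=> y; rewrite in_cons => /orP [/eqP ->|ys]; first by rewrite irr.
  apply/negP => hya; move: (hm y ys); by rewrite (tr a y m hya ham).
exists m; first by rewrite in_cons ms orbT.
by move=> y; rewrite in_cons => /orP [/eqP ->|ys] //; apply: hm.
Qed.

Lemma flex_leafy tau : pairs tau -> total_order_flexible tau -> leafy tau.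
Proof.
move=> hp hfl tau' sub ne.
have hp' : pairs tau' by move=> s sin; apply: hp; apply: (subsetP sub).
case/set0Pn: (ne) => s0 s0in.
have : 0 < #|s0| by rewrite (hp' _ s0in).
case/card_gt0P => r0 r0s0.
have [f [hfin hcov]] := lemC (leqnn _) hp' r0.
pose g (s : {set X}) := if s \in tau' then f s else odflt r0 [pick z in s].
have hg : forall s, s \in tau -> g s \in s.
  move=> s sin; rewrite /g; case: ifP => [/hfin //|_].
  case: pickP => [z //|none].
  have := hp _ sin; rewrite (eq_card0 none) //.
have [lt [[irr [tr _]] hlt]] := hfl g hg.
have r0L : r0 \in L tau' by apply/inL; exists s0.
have [m mL hm] := seq_min irr tr (s := enum (L tau')) ltac:(
  by case: (enum (L tau')) (mem_enum (L tau') r0) => //; rewrite r0L).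
rewrite mem_enum in mL.
exists m; split => //.
have nc : ~~ cov tau' f m.
  apply/negP => /existsP [s /andP [sin /andP [ms fs]]].
  have := hlt s (subsetP sub _ sin) m ms; rewrite /g sin eq_sym => /(_ fs) h.
  have : f s \in enum (L tau') by rewrite mem_enum; apply/inL; exists s => //; apply: hfin.
  by move/hm; rewrite h.
move: nc; apply: contraR; rewrite -ltnNge => hd; apply: hcov => //.
by rewrite hd orbT.
Qed.

End Aux.

Theorem theorem3 (X : finType) (tau : {set {set X}}) :
  pairs tau -> tau != set0 -> (thin tau <-> total_order_flexible tau).
Proof.
move=> hp _; split => h.
  by apply: leafy_flex => //; apply: thin_leafy.
by apply: leafy_thin => //; apply: flex_leafy.
Qed.
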